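(* Let $G$ be a nice graph, $V_4$ the set of vertices of degree at least four in $G$, $\mathcal{P}$ a path partition of $G$, $\mathcal{P}_4\subseteq\mathcal{P}$ the subfamily of paths visiting at least one vertex of $V_4$, $\ell\in\mathbb{N}$, and $(\mathcal{T},d)$ a $(G,V_4,\ell)$-pattern encoding $\mathcal{P}_4$. Then $|\mathcal{P}|\ge \frac{\mathrm{odd}(G)+\mathrm{odd}(\mathcal{T},d)}{2}+|\mathcal{T}|.$
   Context: A path partition of $G$ is a collection of pairwise edge-disjoint paths whose edge sets together cover $E(G)$. $\mathrm{odd}(H)$ is the number of odd-degree vertices of $H$. Graphs are finite, simple, undirected; subcubic means maximum degree $\le 3$. A pan cycle of $G$ is a cycle with a unique vertex of degree $3$ in $G$, the others of degree $2$ in $G$; a bull cycle is a cycle with exactly two vertices of degree $3$ in $G$, the others of degree $2$ in $G$. $G$ is nice if it is connected, not subcubic, has no pan cycles, and all bull cycles are triangles. $N_G[S]$, $N_G(S)$ denote closed/open neighbourhoods. Terminal collection for a family $\mathcal{Q}$ of edge-disjoint paths: a set $U\subseteq V(G)$ with $N_G[V_4]\subseteq U$, containing both endpoints of every path of $\mathcal{Q}$, and such that for all $u,v\in U$, if two distinct paths of $\mathcal{Q}$ both visit $u$ and $v$, then one of them visits another vertex of $U$ between $u$ and $v$. Traces: $X_\ell=\{x_1,\dots,x_\ell\}$ is a set of variables. A $(G,V_4,\ell)$-trace is a sequence over $N_G[V_4]\cup X_\ell$ with no repeated symbol and no variable adjacent to a symbol of $V_4$. $\mathsf{edges}(T)$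 is the set of unordered consecutive pairs of $T$ containing a symbol of $V_4$; $\mathsf{ends}(T)$ is the set of other unordered consecutive pairs. $\deg_T(y)$ is $0$ if $y$ does not occur in $T$, $1$ if $y$ is the first or last element of $T$, $2$ otherwise. Pattern: a pair $(\mathcal{T},d)$, $\mathcal{T}$ a collection of $(G,V_4,\ell)$-traces, $d\colon X_\ell\to\{1,2,3\}$, with: the sets $\mathsf{ends}(T)$ pairwise disjoint and the sets $\mathsf{edges}(T)$ pairwise disjoint over distinct $T\in\mathcal{T}$; $\bigcup_T\mathsf{edges}(T)$ equals the set of edges incident to $V_4$; $\sum_T\deg_T(x_i)\le d(x_i)$ for all $x_i$; $\sum_T\deg_T(v)\le\deg_G(v)$ for all $v\in N_G(V_4)$. Encoding: $(\mathcal{T},d)$ encodes a family $\mathcal{Q}$ of edge-disjoint paths if for some terminal collection $U$ for $\mathcal{Q}$, with $V_X=U\setminus N_G[V_4]$, $\ell=|V_X|$ and a bijection $f\colon X_\ell\to V_X$, $\mathcal{T}$ consists of one trace $T_P$ per $P\in\mathcal{Q}$, obtained by orienting $P$, listing in order its vertices in $N_G[V_4]\cup V_X$ and replacing each $v\in V_X$ by $f^{-1}(v)$, and $d(x_i)=\deg_G(f(x_i))$. Odd number of a pattern: for $y\in N_G[V_4]\cup X_\ell$ let $D(y)=\deg_G(y)$ if $y\in N_G[V_4]$ and $D(y)=d(y)$ if $y\in X_\ell$; $y$ gains oddity if $D(y)$ is even and $\sum_{T}\deg_T(y)$ is odd, and loses oddity if $D(y)$ is odd and $\sum_T\deg_T(y)$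 is odd. $\mathrm{odd}(\mathcal{T},d)$ is the number of elements gaining oddity minus the number losing oddity. *)

(* Defs.v *)
(* Simple graphs as symmetric irreflexive relations on a finType. *)
From mathcomp Require Import all_boot all_order all_algebra.
Set Implicit Arguments. Unset Strict Implicit. Unset Printing Implicit Defensive.

Section Defs.
Variables (T : finType) (e : rel T).

Definition deg (v : T) : nat := #|[set u | e v u]|.

Definition oddG : nat := #|[set v | odd (deg v)]|.

Definition Egraph : {set {set T}} :=
  [set [set uv.1; uv.2] | uv in [set uv : T * T | e uv.1 uv.2]].

Definition is_gpath (p : seq T) : bool :=
  [&& uniq p, 2 <= size p &
      match p with x :: q => path e x q | [::] => false end].

Definition pedges (p : seq T) : {set {set T}} :=
  [set [set ab.1; ab.2] | ab in zip p (behead p)].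

Definition path_partition (P : seq (seq T)) : Prop :=
  (forall p, p \in P -> is_gpath p) /\
  (forall i j, i < size P -> j < size P -> i != j ->
     [disjoint pedges (nth [::] P i) & pedges (nth [::] P j)]) /\
  \bigcup_(p <- P) pedges p = Egraph.

Definition is_gcycle (c : seq T) : bool :=
  [&& uniq c, 3 <= size c & cycle e c].
Definition deg23 (c : seq T) : bool := all (fun v => (deg v == 2) || (deg v == 3)) c.
Definition pan_cycle (c : seq T) : bool :=
  [&& is_gcycle c, deg23 c & count (fun v => deg v == 3) c == 1].
Definition bull_cycle (c : seq T) : bool :=
  [&& is_gcycle c, deg23 c & count (fun v => deg v == 3) c == 2].

Definition nice : Prop :=
  (forall u v, connect e u v) /\
  (exists v, 3 < deg v) /\
  (forall c, ~~ pan_cycle c) /\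
  (forall c, bull_cycle c -> size c = 3).

Definition V4 : {set T} := [set v | 4 <= deg v].
Definition NV4closed : {set T} := V4 :|: [set u | [exists v in V4, e v u]].
Definition NV4open : {set T} := NV4closed :\: V4.

Section Traces.
Variable l : nat.
Notation S := (T + 'I_l)%type.

Definition isV4sym (s : S) : bool :=
  match s with inl v => v \in V4 | inr _ => false end.
Definition isVar (s : S) : bool :=
  match s with inl _ => false | inr _ => true end.
Definition cpairs (t : seq S) : seq (S * S) := zip t (behead t).

Definition is_trace (t : seq S) : bool :=
  [&& uniq t,
      all (fun s => match s with inl v => v \in NV4closed | inr _ => true end) t &
      all (fun ab => ~~ ((isVar ab.1 && isV4sym ab.2) || (isV4sym ab.1 && isVar ab.2)))
          (cpairs t)].

Definition tedges (t : seq S) : {set {set S}} :=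
  [set [set ab.1; ab.2] | ab in cpairs t & isV4sym ab.1 || isV4sym ab.2].
Definition tends (t : seq S) : {set {set S}} :=
  [set [set ab.1; ab.2] | ab in cpairs t & ~~ (isV4sym ab.1 || isV4sym ab.2)].

Definition degT (t : seq S) (y : S) : nat :=
  if y \notin t then 0
  else if (y == head y t) || (y == last y t) then 1 else 2.

Definition EV4 : {set {set S}} :=
  [set [set inl uv.1; inl uv.2] | uv in [set uv : T * T | e uv.1 uv.2 && (uv.1 \in V4)]].

Definition is_pattern (Ts : seq (seq S)) (d : 'I_l -> nat) : Prop :=
  (forall t, t \in Ts -> is_trace t) /\
  (forall x, 1 <= d x <= 3) /\
  (forall i j, i < size Ts -> j < size Ts -> i != j ->
     [disjoint tends (nth [::] Ts i) & tends (nth [::] Ts j)] /\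
     [disjoint tedges (nth [::] Ts i) & tedges (nth [::] Ts j)]) /\
  \bigcup_(t <- Ts) tedges t = EV4 /\
  (forall x, \sum_(t <- Ts) degT t (inr x) <= d x) /\
  (forall v, v \in NV4open -> \sum_(t <- Ts) degT t (inl v) <= deg v).

Definition Dsym (d : 'I_l -> nat) (y : S) : nat :=
  match y with inl v => deg v | inr x => d x end.
Definition symbols : {set S} :=
  [set y : S | match y with inl v => v \in NV4closed | inr _ => true end].
Definition tsum (Ts : seq (seq S)) (y : S) : nat := \sum_(t <- Ts) degT t y.
Definition odd_pattern (Ts : seq (seq S)) (d : 'I_l -> nat) : int :=
  (#|[set y in symbols | ~~ odd (Dsym d y) && odd (tsum Ts y)]|%:Z -
   #|[set y in symbols | odd (Dsym d y) && odd (tsum Ts y)]|%:Z)%R.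

Definition between (p : seq T) (u v w : T) : bool :=
  (w \in p) &&
  (minn (index u p) (index v p) < index w p < maxn (index u p) (index v p)).

Definition terminal_collection (Q : seq (seq T)) (U : {set T}) : Prop :=
  NV4closed \subset U /\
  (forall p, p \in Q ->
     match p with x :: q => (x \in U) && (last x q \in U) | [::] => true end) /\
  (forall i j, i < size Q -> j < size Q -> i != j ->
   forall u v, u \in U -> v \in U -> u != v ->
     u \in nth [::] Q i -> v \in nth [::] Q i ->
     u \in nth [::] Q j -> v \in nth [::] Q j ->
     exists w, [/\ w \in U, w != u, w != v &
                   between (nth [::] Q i) u v w || between (nth [::] Q j) u v w]).

Definition sym_of (f : 'I_l -> T) (v : T) : S :=
  if v \in NV4closed then inl v
  else match [pick x | f x == v] with Some x => inr x | None => inl v end.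

Definition trace_of (f : 'I_l -> T) (U : {set T}) (p : seq T) : seq S :=
  [seq sym_of f v | v <- p & v \in U].

Definition encodes (Ts : seq (seq S)) (d : 'I_l -> nat) (Q : seq (seq T)) : Prop :=
  exists (U : {set T}) (f : 'I_l -> T),
    terminal_collection Q U /\
    l = #|U :\: NV4closed| /\
    injective f /\ f @: setT = U :\: NV4closed /\
    (forall x, d x = deg (f x)) /\
    exists Q' : seq (seq T),
      size Q' = size Q /\
      (forall i, i < size Q ->
         (nth [::] Q' i = nth [::] Q i) \/ (nth [::] Q' i = rev (nth [::] Q i))) /\
      perm_eq Ts [seq trace_of f U p | p <- Q'].

End Traces.
End Defs.

(* Main.v *)
Require Import Defs.
From mathcomp Require Import all_boot all_order all_algebra zify.
Set Implicit Arguments. Unset Strict Implicit. Unset Printing Implicit Defensive.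

Section Aux.
Variables (A : finType) (X : eqType).

Lemma in_bigcup_seq (s : seq X) (F : X -> {set A}) a :
  (a \in \bigcup_(x <- s) F x) = has (fun x => a \in F x) s.
Proof. by elim: s => [|x s IH]; rewrite ?big_nil ?big_cons ?inE // IH. Qed.

Lemma card_bigcup_seq_le (s : seq X) (F : X -> {set A}) :
  #|\bigcup_(x <- s) F x| <= \sum_(x <- s) #|F x|.
Proof.
elim: s => [|x s IH]; rewrite ?big_nil ?big_cons ?cards0 //.
apply: leq_trans (leq_card_setU _ _) _. by rewrite leq_add2l.
Qed.

Lemma card_bigcup_seq_disj x0 (s : seq X) (F : X -> {set A}) :
  (forall i j, i < size s -> j < size s -> i != j ->
     [disjoint F (nth x0 s i) & F (nth x0 s j)]) ->
  #|\bigcup_(x <- s) F x| = \sum_(x <- s) #|F x|.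
Proof.
elim: s => [|x s IH] H; rewrite ?big_nil ?big_cons ?cards0 //.
rewrite cardsU IH; last by move=> i j Hi Hj Hij; apply: (H i.+1 j.+1).
have -> : F x :&: \bigcup_(y <- s) F y = set0.
  apply/setP => a; rewrite !inE in_bigcup_seq; apply/negbTE/negP => /andP [Ha /hasP [y ys Hy]].
  have [j Hj Ey] : exists2 j, j < size s & nth x0 s j = y.
    by exists (index y s); [rewrite index_mem | rewrite nth_index].
  have D := H 0 j.+1 isT Hj isT; rewrite /= Ey in D.
  by rewrite (disjointFr D Ha) in Hy.
by rewrite cards0 subn0.
Qed.

Lemma odd_sum_eq (I : eqType) (r : seq I) (F G : I -> nat) :
  (forall i, i \in r -> odd (F i) = odd (G i)) ->
  odd (\sum_(i <- r) F i) = odd (\sum_(i <- r) G i).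
Proof.
elim: r => [|x r IH] H; rewrite ?big_nil ?big_cons //.
by rewrite !oddD H ?mem_head // IH // => i Hi; apply: H; rewrite inE Hi orbT.
Qed.

Lemma odd_sum_has (I : Type) (r : seq I) (F : I -> nat) :
  odd (\sum_(i <- r) F i) -> has (fun i => odd (F i)) r.
Proof.
elim: r => [|x r IH]; rewrite ?big_nil ?big_cons //= oddD.
by case: (odd (F x)) => //= /IH.
Qed.

Lemma sum_le_const (I : Type) (r : seq I) (F : I -> nat) c :
  (forall i, F i <= c) -> \sum_(i <- r) F i <= c * size r.
Proof.
move=> H; elim: r => [|x r IH]; rewrite ?big_nil ?big_cons // /= mulnS.
by apply: leq_add.
Qed.

End Aux.
Section G.
Variables (T : finType) (e : rel T).
Hypotheses (esym : symmetric e) (eirr : irreflexive e).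

Lemma mem_zip1 (s t : seq T) ab : ab \in zip s t -> (ab.1 \in s) && (ab.2 \in t).
Proof.
elim: s t => [|x s IH] [|y t] //=; rewrite inE => /orP [/eqP -> | /IH /andP [H1 H2]].
  by rewrite !mem_head.
by rewrite !inE H1 H2 !orbT.
Qed.

Lemma pedges_nil (x : T) : pedges [:: x] = set0.
Proof.
apply/setP => E; rewrite inE; apply/negbTE/negP => /imsetP [ab].
by rewrite /= in_nil.
Qed.

Lemma pedges_nil0 : @pedges T [::] = set0.
Proof.
apply/setP => E; rewrite inE; apply/negbTE/negP => /imsetP [ab].
by rewrite /= in_nil.
Qed.

Lemma pedges_cons (x y : T) r : pedges (x :: y :: r) = [set x; y] |: pedges (y :: r).
Proof.
apply/setP => E; rewrite [in RHS]in_setU1; apply/imsetP/orP.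
  case=> ab; rewrite /= in_cons => /orP [/eqP -> -> | Hab ->]; first by left.
  by right; apply/imsetP; exists ab.
case=> [/eqP -> | /imsetP [ab Hab ->]]; first by exists (x, y); rewrite ?mem_head.
by exists ab => //; rewrite /= in_cons Hab orbT.
Qed.

Lemma pedges_sub (p : seq T) E a : E \in pedges p -> a \in E -> a \in p.
Proof.
move=> /imsetP [ab /mem_zip1 /andP [H1 H2] ->]; rewrite !inE => /orP [/eqP -> // | /eqP ->].
by case: p H2 {H1} => //= x q H; rewrite inE H orbT.
Qed.

Definition pd (p : seq T) v := #|[set E in pedges p | v \in E]|.

Lemma pd_cons (x y : T) r v : uniq (x :: y :: r) ->
  pd (x :: y :: r) v = ((v == x) || (v == y)) + pd (y :: r) v.
Proof.
move=> /= /andP [Hx _]; rewrite /pd pedges_cons.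
have Hn : [set x; y] \notin pedges (y :: r).
  apply/negP => /(@pedges_sub _ _ x) H; move/negP: Hx; apply; apply: H.
  by rewrite !inE eqxx.
case Hv: ((v == x) || (v == y)).
  have -> : [set E in [set x; y] |: pedges (y :: r) | v \in E] =
            [set x; y] |: [set E in pedges (y :: r) | v \in E].
    apply/setP => E; rewrite !inE; case: eqP => [-> | _] //=.
    by rewrite !inE Hv.
  by rewrite cardsU1 inE (negbTE Hn).
have -> : [set E in [set x; y] |: pedges (y :: r) | v \in E] =
          [set E in pedges (y :: r) | v \in E].
  apply/setP => E; rewrite !inE; case: eqP => [-> | _] //=.
  by rewrite !inE Hv andbF.
by [].
Qed.

Lemma pd_odd (p : seq T) v : uniq p -> odd (pd p v) = (v == head v p) (+) (v == last v p).
Proof.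
have S0 : forall P : pred {set T}, [set E in (set0 : {set {set T}}) | P E] = set0.
  by move=> P; apply/setP => E; rewrite !inE.
case: p => [|x q] /=.
  by rewrite /pd pedges_nil0 S0 cards0 addbb.
elim: q x => [|y r IH] x U.
  by rewrite /pd pedges_nil S0 cards0 /= addbb.
rewrite pd_cons // oddD IH; last by case/andP: U.
have Hxy : x != y by move: U; rewrite /= inE negb_or => /andP [/andP [] ] .
rewrite /=; case: (eqVneq v x) => [-> | vx] /=.
  by rewrite (negbTE Hxy).
by case: (v == y); case: (v == last y r).
Qed.

Lemma deg_sum (P : seq (seq T)) : path_partition e P -> forall v, deg e v = \sum_(p <- P) pd p v.
Proof.
move=> [_ [Hdis Hcov]] v.
have -> : \sum_(p <- P) pd p v = #|\bigcup_(p <- P) [set E in pedges p | v \in E]|.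
  rewrite (@card_bigcup_seq_disj _ _ [::]) // => i j Hi Hj Hij.
  have D := Hdis i j Hi Hj Hij.
  apply: (disjointWl _ (disjointWr _ D)); apply/subsetP => E; rewrite inE => /andP [].
  by []. by [].
have -> : \bigcup_(p <- P) [set E in pedges p | v \in E] = [set E in Egraph e | v \in E].
  apply/setP => E; rewrite in_bigcup_seq; apply/idP/idP.
    move/hasP => [p Hp]; rewrite inE => /andP [H1 H2].
    rewrite inE H2 andbT -Hcov in_bigcup_seq; apply/hasP; by exists p.
  rewrite inE -Hcov in_bigcup_seq => /andP [/hasP [p Hp H1] H2]; apply/hasP; exists p => //.
  by rewrite inE H1.
rewrite /deg.
have -> : [set E in Egraph e | v \in E] = (fun u => [set v; u]) @: [set u | e v u].
  apply/setP => E; rewrite inE; apply/andP/imsetP.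
    case=> /imsetP [uv]; rewrite inE => Huv ->; rewrite !inE => /orP [/eqP Hv | /eqP Hv].
      by exists uv.2; [rewrite inE Hv | rewrite Hv].
    by exists uv.1; [rewrite inE Hv esym | rewrite Hv setUC].
  case=> u; rewrite inE => Hu ->; split; last by rewrite !inE eqxx.
  by apply/imsetP; exists (v, u); rewrite ?inE.
rewrite card_in_imset // => u w; rewrite !inE => Hu Hw Heq.
have : w \in [set v; u] by rewrite Heq !inE eqxx orbT.
rewrite !inE => /orP [/eqP wv | /eqP //].
by move: Hw; rewrite wv eirr.
Qed.
End G.

Lemma head_rev' (T : Type) (z : T) p : head z (rev p) = last z p.
Proof. by case/lastP: p => [|q x] //; rewrite rev_rcons last_rcons. Qed.

Lemma last_rev' (T : Type) (z : T) p : last z (rev p) = head z p.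
Proof. by case: p => [|x q] //; rewrite rev_cons last_rcons. Qed.

Lemma last_filter_in (T : eqType) (a : pred T) (x : T) q :
  a x -> a (last x q) -> last x (filter a q) = last x q.
Proof.
elim: q x => [|y r IH] x //= ax al.
case: ifP => ay /=; first exact: IH.
case: r IH al => [|z r] IH al; first by rewrite /= ay in al.
exact: IH x ax al.
Qed.

Section Enc.
Variables (T : finType) (e : rel T) (l : nat) (f : 'I_l -> T) (U : {set T}).

Lemma sym_cases v :
  f @: setT = U :\: NV4closed e -> v \in U ->
  (v \in NV4closed e /\ sym_of e f v = inl v) \/ (exists x, sym_of e f v = inr x /\ f x = v).
Proof.
move=> Himf vU; rewrite /sym_of; case: ifP => Hn; [by left | right].
have : v \in f @: setT by rewrite Himf inE Hn vU.
case/imsetP => x _ Ev; rewrite Ev.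
case: pickP => [y /eqP fy | H]; first by exists y.
by have := H x; rewrite eqxx.
Qed.

Lemma sym_inj : injective f -> f @: setT = U :\: NV4closed e ->
  {in U &, injective (sym_of e f)}.
Proof.
move=> finj Himf v w vU wU.
case: (sym_cases Himf vU) => [[_ ->]|[x [-> <-]]];
case: (sym_cases Himf wU) => [[_ ->]|[y [-> <-]]] // H; by case: H => ->.
Qed.

Lemma Dsym_sym (d : 'I_l -> nat) v : f @: setT = U :\: NV4closed e -> v \in U ->
  (forall x, d x = deg e (f x)) -> Dsym e d (sym_of e f v) = deg e v.
Proof.
move=> Himf vU Hd.
by case: (sym_cases Himf vU) => [[_ ->] | [x [-> <-]]] //=.
Qed.

Lemma symbols_im : injective f -> f @: setT = U :\: NV4closed e -> NV4closed e \subset U ->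
  symbols e l = sym_of e f @: U.
Proof.
move=> finj Himf HNU.
apply/setP => y; rewrite inE; apply/idP/imsetP.
  case: y => [v Hv | x _].
    by exists v; [exact: (subsetP HNU) | rewrite /sym_of Hv].
  have : f x \in f @: setT by apply: imset_f.
  rewrite Himf inE => /andP [Hn fxU].
  exists (f x) => //.
  case: (sym_cases Himf fxU) => [[Hn' _] | [y [Hy fy]]].
    by rewrite Hn' in Hn.
  by rewrite Hy (finj _ _ fy).
case=> v vU ->; by case: (sym_cases Himf vU) => [[Hn ->] | [x [-> _]]].
Qed.

Lemma degT_odd (t' : seq (T + 'I_l)) s0 y : s0 != last s0 t' ->
  odd (degT (s0 :: t') y) = (y == s0) (+) (y == last s0 t').
Proof.
move=> Hne; rewrite /degT /=.
case: (eqVneq y s0) => [-> | ys]; first by rewrite mem_head /= ?eqxx ?(negbTE Hne).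
case: (eqVneq y (last s0 t')) => [-> | yl].
  have -> : last s0 t' \in s0 :: t' by exact: mem_last.
  by [].
by case: ifP.
Qed.

Lemma trace_odd (p : seq T) v :
  injective f -> f @: setT = U :\: NV4closed e ->
  uniq p -> 1 < size p -> head v p \in U -> last v p \in U -> v \in U ->
  odd (degT (trace_of e f U p) (sym_of e f v)) = (v == head v p) (+) (v == last v p).
Proof.
move=> finj Himf.
case: p => [|x q] //= Hu Hs hx hl vU.
rewrite /trace_of /= hx /= degT_odd; last first.
  rewrite last_map last_filter_in //.
  rewrite (inj_in_eq (sym_inj finj Himf)) //.
  case: q Hu Hs hl => [|y r] //= /andP [Hx _] _ _.
  by apply: contraNneq Hx => ->; exact: mem_last.
rewrite last_map last_filter_in //.
by rewrite !(inj_in_eq (sym_inj finj Himf)).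
Qed.
End Enc.

Theorem lemma21 (T : finType) (e : rel T)
  (esym : symmetric e) (eirr : irreflexive e)
  (Hnice : nice e)
  (P : seq (seq T)) (HP : path_partition e P)
  (l : nat) (Ts : seq (seq (T + 'I_l))) (d : 'I_l -> nat)
  (Hpat : is_pattern e Ts d)
  (Henc : encodes e Ts d [seq p <- P | has (fun v => v \in V4 e) p]) :
  ((oddG e)%:Z + odd_pattern e Ts d + (2 * size Ts)%:Z <= (2 * size P)%:Z)%R.
Proof.
have Hdeg := deg_sum esym eirr HP.
have [Hpath _] := HP.
case: Henc => U [f [[HNU [Hend _]] [_ [finj [Himf [Hd [Q' [HsQ [HQ' Hperm]]]]]]]]].
set a := (fun p : seq T => has (fun v => v \in V4 e) p) in Hend HQ' HsQ.
set Q := [seq p <- P | a p] in Hend HQ' HsQ.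
set R := [seq p <- P | ~~ a p].
set sym := sym_of e f.
have QP : forall p, p \in Q -> p \in P by move=> p; rewrite mem_filter => /andP [].
have RP : forall p, p \in R -> p \in P by move=> p; rewrite mem_filter => /andP [].
have Hg : forall p, p \in P -> uniq p /\ 1 < size p.
  by move=> p /Hpath /and3P [? ? _].
have HendQ : forall p z, p \in Q -> (head z p \in U) && (last z p \in U).
  move=> p z Hp; have [_ Hs] := Hg p (QP p Hp); have := Hend p Hp.
  by case: p Hp Hs.
pose dQ v := \sum_(p <- Q) pd p v.
pose dR v := \sum_(p <- R) pd p v.
have HoQout : forall v, v \notin U -> ~~ odd (dQ v).
  move=> v vU; apply/negP => /odd_sum_has /hasP [p Hp].
  rewrite pd_odd; last by case: (Hg p (QP p Hp)).
  case/andP: (HendQ p v Hp) => h1 h2.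
  have Hh : (v == head v p) = false by apply: (contraNF _ vU) => /eqP ->.
  have Hl : (v == last v p) = false by apply: (contraNF _ vU) => /eqP ->.
  by rewrite Hh Hl.
have HoQin : forall v, v \in U -> odd (tsum Ts (sym v)) = odd (dQ v).
  move=> v vU; rewrite /tsum /dQ (perm_big _ Hperm) big_map.
  rewrite (big_nth [::]) (big_nth [::] _ (fun p => pd p v)) HsQ.
  apply: odd_sum_eq => i; rewrite mem_index_iota => /andP [_ Hi].
  have HpQ : nth [::] Q i \in Q := mem_nth [::] Hi.
  have [Hu Hs] := Hg _ (QP _ HpQ).
  have /andP [h1 h2] := HendQ _ v HpQ.
  rewrite pd_odd //.
  case: (HQ' i Hi) => ->; first by rewrite trace_odd.
  rewrite trace_odd ?rev_uniq ?size_rev ?head_rev' ?last_rev' //.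
  by rewrite addbC.
have HsT : size Ts = size Q by rewrite (perm_size Hperm) size_map HsQ.
have HsP : size P = size Q + size R by rewrite !size_filter count_predC.
have HdR : forall v, odd (dR v) = odd (deg e v) (+) odd (dQ v).
  move=> v.
  have Hspl : \sum_(p <- P) pd p v = dQ v + dR v by rewrite /dQ /dR !big_filter (bigID a).
  rewrite Hdeg Hspl oddD.
  by case: (odd (dQ v)); case: (odd (dR v)).
have HxR : #|[set v | odd (dR v)]| <= 2 * size R.
  pose F (p : seq T) := [set z | (z == head z p) (+) (z == last z p)].
  apply: (@leq_trans #|\bigcup_(p <- R) F p|).
    apply: subset_leq_card; apply/subsetP => v; rewrite inE => /odd_sum_has /hasP [p Hp].
    rewrite pd_odd; last by case: (Hg p (RP p Hp)).
    by move=> H; rewrite in_bigcup_seq; apply/hasP; exists p; rewrite // inE.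
  apply: leq_trans (card_bigcup_seq_le _ _) _.
  apply: sum_le_const => p.
  case: p => [|x q].
    by rewrite /F; apply: leq_trans (subset_leq_card (_ : _ \subset set0)) _;
      [apply/subsetP => z; rewrite inE /= eqxx | rewrite cards0].
  apply: leq_trans (subset_leq_card (_ : _ \subset [set x; last x q])) _.
    by apply/subsetP => z; rewrite !inE /=; case: (z == x); case: (z == last x q).
  by apply: leq_trans (leq_card_setU _ _) _; rewrite !cards1.
have Hcard : forall h : bool -> bool -> bool, (forall b, h b false = false) ->
   #|[set y in symbols e l | h (odd (Dsym e d y)) (odd (tsum Ts y))]| =
   #|[set v | h (odd (deg e v)) (odd (dQ v))]|.
  move=> h Hh.
  have sub : [set v | h (odd (deg e v)) (odd (dQ v))] \subset U.
    apply/subsetP => v; rewrite inE; apply: contraTT => vU.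
    by rewrite (negbTE (HoQout v vU)) Hh.
  rewrite -(card_in_imset (f := sym)); last first.
    by move=> x y /(subsetP sub) xU /(subsetP sub) yU; apply: (sym_inj finj Himf xU yU).
  apply: eq_card => y; rewrite inE (symbols_im finj Himf HNU).
  apply/andP/imsetP.
    case=> /imsetP [v vU ->] Hy; exists v => //.
    by rewrite inE -(Dsym_sym Himf vU Hd) -HoQin.
  case=> v Hv ->; have vU := subsetP sub v Hv; split; first exact: imset_f.
  by rewrite (Dsym_sym Himf vU Hd) HoQin //; rewrite inE in Hv.
have HA := Hcard (fun a b => ~~ a && b) (fun b => andbF _).
have HB := Hcard (fun a b => a && b) (fun b => andbF _).
cbv beta in HA. cbv beta in HB.
have HX : #|[set v | odd (dR v)]| + #|[set v | odd (deg e v) && odd (dQ v)]| =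
          #|[set v | odd (deg e v)]| + #|[set v | ~~ odd (deg e v) && odd (dQ v)]|.
  rewrite -cardsUI -[RHS]cardsUI; congr (_ + _); apply: eq_card => v;
  by rewrite !inE HdR; case: (odd (deg e v)); case: (odd (dQ v)).
rewrite /odd_pattern HA HB HsT HsP /oddG.
lia.
Qed.
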